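(* Suppose that for all positive integers $s,t,k$ with $st \le k^2$ one has $R(s,t) \le R(k,k)$. Then \[ \limsup_{k\to\infty} \frac{\log(R(k,k))}{k} = \limsup_{t\to\infty} \max_{1 \le s \le t} \frac{\log(R(s,t))}{\sqrt{st}}. \]
   Context: All logarithms are in base 2. For positive integers $s,t$, the Ramsey number $R(s,t)$ is the minimum $n$ such that every red/blue edge-coloring of the complete graph $K_n$ contains a red clique on $s$ vertices or a blue clique on $t$ vertices. *)

(* Defs.v *)
From HB Require Import structures.
From mathcomp Require Import all_boot all_order all_algebra.
From mathcomp Require Import all_classical all_reals all_analysis.
Set Implicit Arguments. Unset Strict Implicit. Unset Printing Implicit Defensive.
Import Order.TTheory GRing.Theory Num.Theory.

(* A red/blue edge-colouring of K_n: a colour (true = red, false = blue)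
   for each 2-element subset {x,y} of the vertex set 'I_n
   (values on other subsets are irrelevant). *)
Definition mono_clique n (c : {ffun {set 'I_n} -> bool}) (b : bool)
  (S : {set 'I_n}) : bool :=
  [forall x in S, forall y in S, (x != y) ==> (c [set x; y] == b)].

Definition ramsey_prop (s t n : nat) : bool :=
  [forall c : {ffun {set 'I_n} -> bool},
     [exists S : {set 'I_n}, (#|S| == s) && mono_clique c true S] ||
     [exists S : {set 'I_n}, (#|S| == t) && mono_clique c false S]].

(* R(s,t): the minimum such n (it exists by Ramsey's theorem; 0 is a junk
   value that never occurs). *)
Definition ramsey (s t : nat) : nat :=
  match pselect (exists n, ramsey_prop s t n) with
  | left H => ex_minn H
  | right _ => 0%N
  end.

Definition log2 {R : realType} (x : R) : R := (ln x / ln 2)%R.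

(* Main.v *)
Require Import Defs.
From HB Require Import structures.
From mathcomp Require Import all_boot all_order all_algebra.
From mathcomp Require Import all_classical all_reals all_analysis.
From mathcomp Require Import lra zify.
Import Order.TTheory GRing.Theory Num.Theory.
Local Open Scope ring_scope.

Section Aux.
Context {R : realType}.

Lemma esupE (u : (\bar R)^nat) : limn_esup u = ereal_inf (range (esups u)).
Proof. rewrite limn_esup_lim; apply: cvg_lim => //; exact: cvg_esups_inf. Qed.

Lemma esups_le (u : (\bar R)^nat) n c :
  (forall k, (n <= k)%N -> (u k <= c)%E) -> (esups u n <= c)%E.
Proof. move=> H; apply: ge_ereal_sup => _ [k /= nk <-]; exact: H. Qed.

Lemma le_esups (u : (\bar R)^nat) n k : (n <= k)%N -> (u k <= esups u n)%E.
Proof. move=> nk; apply: ereal_sup_ubound; by exists k. Qed.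

Lemma limsup_le_esups (u : (\bar R)^nat) n : (limn_esup u <= esups u n)%E.
Proof. rewrite esupE; apply: ereal_inf_lbound; by exists n. Qed.

Lemma limsup_lt (u : (\bar R)^nat) c :
  (limn_esup u < c)%E -> exists n, forall k, (n <= k)%N -> (u k < c)%E.
Proof.
rewrite esupE => /ereal_inf_lt [_ [n _ <-]] H; exists n => k nk.
apply: (le_lt_trans _ H); exact: le_esups.
Qed.

Lemma le_limsup_ev (u v : (\bar R)^nat) N :
  (forall n, (N <= n)%N -> (u n <= v n)%E) -> (limn_esup u <= limn_esup v)%E.
Proof.
move=> H; rewrite [limn_esup v]esupE; apply: le_ereal_inf_tmp => _ [n _ <-].
apply: le_trans (limsup_le_esups u (maxn N n)) _.
apply: esups_le => k Hk; apply: le_trans (H k _) _.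
  exact: leq_trans (leq_maxl _ _) Hk.
apply: le_esups; exact: leq_trans (leq_maxr _ _) Hk.
Qed.

Lemma log2_ge0 (n : nat) : 0 <= log2 (n%:R : R).
Proof.
rewrite /log2; apply: divr_ge0; last by apply: ln_ge0; rewrite ler1n.
case: n => [|n]; first by rewrite ln0.
by apply: ln_ge0; rewrite ler1n.
Qed.

Lemma log2_le (n m : nat) : (n <= m)%N -> log2 (n%:R : R) <= log2 (m%:R : R).
Proof.
move=> nm; rewrite /log2; apply: ler_wpM2r.
  by rewrite invr_ge0; apply: ln_ge0; rewrite ler1n.
case: n nm => [|n] nm.
  rewrite ln0 //; case: m {nm} => [|m]; first by rewrite ln0.
  by apply: ln_ge0; rewrite ler1n.
rewrite ler_ln ?posrE ?ltr0n ?ler_nat //; lia.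
Qed.
End Aux.

Lemma real_core (R : realType) (x y r e k q c : R) :
  0 < e -> 0 <= r + e -> x <= y -> y <= (r + e) * k -> k <= q + 1 ->
  c * e = r + e -> c <= q -> 0 < q -> x / q <= r + e * 2.
Proof.
move=> e0 re xy yk kq ce cq q0; rewrite ler_pdivrMr //.
have h1 : (r + e) * k <= (r + e) * (q + 1) by apply: ler_wpM2l.
have h2 : c * e <= q * e by apply: ler_wpM2r => //; exact: ltW.
lra.
Qed.

Theorem fact2p3 (R : realType) :
  (forall s t k : nat, (0 < s)%N -> (0 < t)%N -> (0 < k)%N ->
     (s * t <= k ^ 2)%N -> (ramsey s t <= ramsey k k)%N) ->
  limn_esup (fun k : nat => (log2 ((ramsey k k)%:R : R) / k%:R)%:E)
  = limn_esup (fun t : nat =>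
      \big[Order.max/-oo%E]_(1 <= s < t.+1)
        (log2 ((ramsey s t)%:R : R) / Num.sqrt ((s * t)%:R))%:E).
Proof.
move=> HR.
set a := (fun k : nat => _).
set b := (fun t : nat => _).
have a0 k : (0 <= a k)%E.
  by rewrite /a lee_fin divr_ge0 // log2_ge0.
apply/eqP; rewrite eq_le; apply/andP; split.
  apply: (@le_limsup_ev _ a b 1) => t t1.
  rewrite /b.
  have := @le_bigmax_seq _ _ _ (index_iota 1 t.+1) -oo%E t xpredT
    (fun s => (log2 ((ramsey s t)%:R : R) / Num.sqrt ((s * t)%:R))%:E).
  rewrite mem_index_iota t1 ltnSn => /(_ isT isT).
  by rewrite /a natrM -expr2 sqrtr_sqr normr_nat.
case EL: (limn_esup a) => [r| |]; last 2 first.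
- exact: leey.
- have : (limn_esup a < (-1)%:E)%E by rewrite EL ltNyr.
  move=> /limsup_lt [n Hn]; have := Hn n (leqnn n).
  by rewrite ltNge (le_trans _ (a0 n)) // lee_fin lerN10.
apply/lee_addgt0Pr => e e0.
set e' := e / 2.
have e'0 : 0 < e' by rewrite divr_gt0.
have : (limn_esup a < (r + e')%:E)%E by rewrite EL lte_fin ltrDl.
move=> /limsup_lt [N HN].
have aN k : (N <= k)%N -> log2 ((ramsey k k)%:R : R) / k%:R <= r + e'.
  by move=> /HN; rewrite /a lte_fin => /ltW.
have re0 : 0 <= r + e'.
  by apply: le_trans (aN N (leqnn N)); rewrite divr_ge0 // log2_ge0.
set c := (r + e') / e'.
have c0 : 0 <= c by rewrite divr_ge0 // ltW.
have ce : c * e' = r + e' by rewrite /c mulrVK // unitfE gt_eqF.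
set T := maxn (N ^ 2) (maxn 1 (Num.Def.archi_bound (c ^+ 2))).
apply: le_trans (limsup_le_esups b T) _.
apply: esups_le => t Tt.
rewrite /b big_seq_cond; apply: bigmax_le; first exact: leNye.
move=> s; rewrite andbT mem_index_iota => /andP [s1 st].
rewrite -EFinD lee_fin.
have t1 : (1 <= t)%N by move: Tt; rewrite /T; lia.
have NT : (N ^ 2 <= t)%N by move: Tt; rewrite /T; lia.
have cT : c ^+ 2 < t%:R.
  apply: lt_le_trans (archi_boundP (exprn_ge0 2 c0)) _.
  rewrite ler_nat; apply: leq_trans Tt; rewrite /T.
  exact: leq_trans (leq_maxr _ _) (leq_maxr _ _).
have stpos : (0 < s * t)%N by rewrite muln_gt0; apply/andP; split.
have exk : exists k, (s * t <= k ^ 2)%N.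
  by exists (s * t); rewrite expnS expn1 leq_pmulr.
case: (ex_minnP exk) => k Hk Hmin.
have k1 : (0 < k)%N.
  by case: k Hk {Hmin} => // Hk; move: Hk; rewrite expnS mul0n leqn0 => /eqP Hk; move: stpos; rewrite Hk.
have km : (k.-1 ^ 2 < s * t)%N.
  rewrite ltnNge; apply/negP => /Hmin; lia.
have kN : (N <= k)%N.
  rewrite leqNgt; apply/negP => kN.
  have : (k ^ 2 < N ^ 2)%N by rewrite ltn_exp2r.
  move: NT Hk; nia.
have HRk := HR s t k s1 t1 k1 Hk.
set q := Num.sqrt ((s * t)%:R : R).
have q0 : 0 < q by rewrite sqrtr_gt0 ltr0n.
have kq : (k%:R : R) <= q + 1.
  have : (k.-1%:R : R) < q.
    rewrite -[X in X < _]ger0_norm // -sqrtr_sqr ltr_sqrt ?ltr0n //.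
    by rewrite -natrX ltr_nat.
  have -> : (k%:R : R) = k.-1%:R + 1 by rewrite natr1 prednK.
  move=> H; lra.
have cq : c <= q.
  rewrite -[c]ger0_norm // -sqrtr_sqr ler_sqrt //.
  apply: le_trans (ltW cT) _; rewrite ler_nat; move: s1; nia.
have yk : log2 ((ramsey k k)%:R : R) <= (r + e') * k%:R.
  by rewrite -ler_pdivrMr ?ltr0n //; apply: aN.
have -> : e = e' * 2 by rewrite /e' divfK.
have H := (@real_core R _ _ _ _ _ _ _ e'0 re0 (@log2_le R _ _ HRk) yk kq ce cq q0). exact H.
Qed.
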